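(* Let $k\ge2$ and $n\ge1$. For every permutation $P$ of $\{1,\dots,k^n\}$, there is a strategy for labeled chip-firing starting with $k^{2n}$ chips labeled $1,\dots,k^{2n}$ at the root of the infinite rooted directed $k$-ary tree whose stable configuration (a permutation of $\{1,\dots,k^{2n}\}$) contains a subsequence of length $k^n$ that is order-isomorphic to $P$.
   Context: Labeled chip-firing on the infinite rooted directed $k$-ary tree (each vertex has $k$ children ordered left to right, root on layer $1$): a vertex with at least $k$ chips may fire by choosing any $k$ of its chips and sending the $i$-th smallest label among them to its $i$-th leftmost child. A strategy is a sequence of legal firings continued until no vertex has $\ge k$ chips. Starting with $k^p$ chips at the root, every stable configuration has exactly one chip on each vertex of layer $p+1$ and none elsewhere, and is identified with the permutation of labels read left to right on layer $p+1$. A sequence $w_1,\dots,w_n$ of distinct numbers is order-isomorphic to a permutation $\sigma\in S_n$ if, for each $j$, $w_j$ is the $\sigma_j$-th smallest of $w_1,\dots,w_n$. *)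

(* Defs.v *)
From mathcomp Require Import all_boot all_fingroup.
Set Implicit Arguments. Unset Strict Implicit. Unset Printing Implicit Defensive.

(* Vertices of the infinite rooted k-ary tree: sequences of child indices
   (each < k); the root is [::] (layer 1), a vertex v is on layer size v + 1,
   and the i-th leftmost child (0-based i) of v is rcons v i.  A configuration [pos : nat -> seq nat] gives the
   vertex of each chip (only labels 1..N are meaningful). *)

Definition chips (N : nat) := iota 1 N.

Definition init_conf : nat -> seq nat := fun _ => [::].

Definition legal_fire (k N : nat) (pos : nat -> seq nat) (v : seq nat)
    (s : seq nat) : bool :=
  [&& size s == k, sorted ltn s & all (fun l => (l \in chips N) && (pos l == v)) s].

(* Result of the firing: the i-th smallest chosen label goes to the i-th
   leftmost child of v. *)
Definition fire (pos : nat -> seq nat) (v : seq nat) (s : seq nat) :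
    nat -> seq nat :=
  fun l => if l \in s then rcons v (index l s) else pos l.

Inductive reachable (k N : nat) : (nat -> seq nat) -> Prop :=
| reach_init : reachable k N init_conf
| reach_fire pos v s : reachable k N pos -> legal_fire k N pos v s ->
    reachable k N (fire pos v s).

Definition stable (k N : nat) (pos : nat -> seq nat) : Prop :=
  forall v : seq nat, count (fun l => pos l == v) (chips N) < k.

(* Left-to-right order of vertices (lexicographic on child-index sequences;
   on a fixed layer this is exactly the left-to-right order). *)
Fixpoint lex_le (a b : seq nat) : bool :=
  match a, b with
  | [::], _ => true
  | _ :: _, [::] => false
  | x :: a', y :: b' => (x < y) || ((x == y) && lex_le a' b')
  end.

Definition read_word (N : nat) (pos : nat -> seq nat) : seq nat :=
  sort (fun l1 l2 => lex_le (pos l1) (pos l2)) (chips N).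

(* t (distinct numbers) is order-isomorphic to sigma in S_m: for each j,
   t_j is the sigma_j-th smallest entry (0-based: exactly sigma j entries of t
   are smaller than t_j). *)
Definition order_iso (m : nat) (t : seq nat) (sigma : 'S_m) : Prop :=
  [/\ size t = m, uniq t &
      forall j : 'I_m, count (fun x => x < nth 0 t j) t = sigma j].

(* Main.v *)
Require Import Defs.
From mathcomp Require Import all_boot all_fingroup zify.
From Stdlib Require Import FunctionalExtensionality.
Set Implicit Arguments. Unset Strict Implicit. Unset Printing Implicit Defensive.

Definition dg (k q x : nat) := (x %/ k ^ q) %% k.
Definition enc (k p a i : nat) := a %% k ^ p + k ^ p * (i + k * (a %/ k ^ p)).
Definition dec (k p x : nat) := x %% k ^ p + k ^ p * (x %/ k ^ p.+1).

Lemma modDMk i k q : (i + k * q) %% k = i %% k.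
Proof. by rewrite mulnC addnC modnMDl. Qed.

Lemma divDMk i k q : i < k -> (i + k * q) %/ k = q.
Proof.
move=> ik; have k0 : 0 < k := leq_ltn_trans (leq0n i) ik.
by rewrite mulnC addnC divnMDl // divn_small ?addn0.
Qed.

Lemma enc_div k p a i : 0 < k -> enc k p a i %/ k ^ p = i + k * (a %/ k ^ p).
Proof.
move=> k0; have K0 : 0 < k ^ p by rewrite expn_gt0 k0.
by rewrite /enc (mulnC (k ^ p)) [a %% _ + _]addnC divnMDl // (divn_small (ltn_pmod _ K0)) addn0.
Qed.

Lemma enc_mod k p a i : 0 < k -> enc k p a i %% k ^ p = a %% k ^ p.
Proof.
move=> k0; have K0 : 0 < k ^ p by rewrite expn_gt0 k0.
by rewrite /enc (mulnC (k ^ p)) [a %% _ + _]addnC modnMDl modn_mod.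
Qed.

Lemma enc_digit k p a i : i < k -> dg k p (enc k p a i) = i.
Proof.
move=> ik; have k0 : 0 < k := leq_ltn_trans (leq0n i) ik.
by rewrite /dg enc_div // modDMk modn_small.
Qed.

Lemma dg_mod k q P x : 0 < k -> q < P -> dg k q x = dg k q (x %% k ^ P).
Proof.
move=> k0 qP; rewrite /dg divn_modl ?dvdn_exp2l ?(ltnW qP) //.
rewrite -expnB ?(ltnW qP) //; apply/esym/modn_dvdm.
by rewrite -{1}(expn1 k) dvdn_exp2l // subn_gt0.
Qed.

Lemma enc_other k p q a i : i < k -> q != p ->
  dg k q (enc k p a i) = dg k q (enc k p a 0).
Proof.
move=> ik qp; have k0 : 0 < k := leq_ltn_trans (leq0n i) ik.
case: (ltngtP q p) qp => // [qp|pq] _.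
  by rewrite (dg_mod _ k0 qp) [in RHS](dg_mod _ k0 qp) !enc_mod.
rewrite /dg -(subnKC pq) expnD !divnMA expnSr !divnMA !enc_div //.
by rewrite !divDMk.
Qed.

Lemma enc_inj k p a a' i i' : i < k -> i' < k ->
  enc k p a i = enc k p a' i' -> a = a' /\ i = i'.
Proof.
move=> ik ik' E; have k0 : 0 < k := leq_ltn_trans (leq0n i) ik.
have E1 := congr1 (fun x => x %% k ^ p) E; have E2 := congr1 (fun x => x %/ k ^ p) E.
rewrite /= !enc_mod // in E1; rewrite /= !enc_div // in E2.
have Ei : i = i'.
  by have := congr1 (modn^~ k) E2; rewrite /= !modDMk !modn_small.
split => //; subst i'; move/addnI/eqP: E2; rewrite eqn_mul2l eqn0Ngt k0 /= => /eqP E2.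
by rewrite (divn_eq a (k ^ p)) (divn_eq a' (k ^ p)) E1 E2.
Qed.

Lemma enc_dec k p x : 0 < k -> enc k p (dec k p x) (dg k p x) = x.
Proof.
move=> k0; have K0 : 0 < k ^ p by rewrite expn_gt0 k0.
have dm : dec k p x %% k ^ p = x %% k ^ p.
  by rewrite /dec (mulnC (k ^ p)) [x %% _ + _]addnC modnMDl modn_mod.
have dd : dec k p x %/ k ^ p = x %/ k ^ p.+1.
  by rewrite /dec (mulnC (k ^ p)) [x %% _ + _]addnC divnMDl // (divn_small (ltn_pmod _ K0)) addn0.
rewrite /enc dm dd /dg expnSr divnMA.
by rewrite [_ %% k + _]addnC (mulnC k) -divn_eq mulnC addnC -divn_eq.
Qed.

Lemma enc_lt k p m a i : p <= m -> a < k ^ m -> i < k -> enc k p a i < k ^ m.+1.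
Proof.
move=> pm am ik; have k0 : 0 < k := leq_ltn_trans (leq0n i) ik.
have K0 : 0 < k ^ p by rewrite expn_gt0 k0.
have E : k ^ m = k ^ (m - p) * k ^ p by rewrite -expnD subnK.
have qQ : a %/ k ^ p < k ^ (m - p) by rewrite ltn_divLR // -E.
have rK := ltn_pmod a K0.
rewrite /enc expnS E.
move: qQ rK ik; move: (k ^ p) (k ^ (m - p)) (a %% k ^ p) (a %/ k ^ p) => K Q r q.
move=> qQ rK ik.
have H1 : i + k * q < k * Q.
  have : k * q.+1 <= k * Q by rewrite leq_mul2l qQ orbT.
  rewrite mulnS; lia.
have H2 : K * (i + k * q) <= K * (k * Q - 1) by rewrite leq_mul2l; apply/orP; right; lia.
have H3 : K * (k * Q - 1) + K = k * (Q * K).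
  rewrite -mulnSr subn1 prednK; last by lia.
  by rewrite mulnC mulnA.
lia.
Qed.

Lemma dec_lt k p m x : 0 < k -> p <= m -> x < k ^ m.+1 -> dec k p x < k ^ m.
Proof.
move=> k0 pm xm.
have K0 : 0 < k ^ p by rewrite expn_gt0 k0.
have E : k ^ m = k ^ (m - p) * k ^ p by rewrite -expnD subnK.
have qQ : x %/ k ^ p.+1 < k ^ (m - p).
  by rewrite ltn_divLR ?expn_gt0 ?k0 // expnSr mulnA -E -expnSr.
have rK := ltn_pmod x K0.
rewrite /dec E.
move: qQ rK; move: (x %/ k ^ p.+1) (x %% k ^ p) (k ^ (m - p)) (k ^ p) => q r Q K.
move=> *; nia.
Qed.

Definition fire_list (pos : nat -> seq nat) (L : seq (seq nat * seq nat)) :=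
  foldl (fun p vs => fire p vs.1 vs.2) pos L.

Lemma fire_out pos v s l : l \notin s -> fire pos v s l = pos l.
Proof. by rewrite /fire => /negbTE ->. Qed.

Lemma fire_list_out pos L l : l \notin flatten (map snd L) -> fire_list pos L l = pos l.
Proof.
elim: L pos => //= x L IH pos; rewrite mem_cat negb_or => /andP[h1 h2].
by rewrite IH // fire_out.
Qed.

Lemma fire_list_in pos L vs l : uniq (flatten (map snd L)) -> vs \in L -> l \in vs.2 ->
  fire_list pos L l = rcons vs.1 (index l vs.2).
Proof.
elim: L pos => //= x L IH pos; rewrite cat_uniq => /and3P[_ hx u] vsin lin.
rewrite inE in vsin; case/orP: vsin => [/eqP E|vsin]; last by rewrite IH.
subst vs; rewrite fire_list_out; first by rewrite /fire lin.
by apply: contra hx => h; apply/hasP; exists l.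
Qed.

Lemma fire_list_reach k N pos L : reachable k N pos -> uniq (flatten (map snd L)) ->
  all (fun vs => legal_fire k N pos vs.1 vs.2) L -> reachable k N (fire_list pos L).
Proof.
elim: L pos => //= x L IH pos R; rewrite cat_uniq => /and3P[_ hx u] /andP[lx lL].
apply: IH => //; first exact: reach_fire.
apply/allP => vs vsin; have := allP lL vs vsin.
rewrite /legal_fire => /and3P[-> -> /allP al] /=.
apply/allP => l ls; have := al l ls; rewrite fire_out //.
apply: contra hx => h; apply/hasP; exists l => //.
by apply/flatten_mapP; exists vs.
Qed.

Lemma in_chipsS N x : (x.+1 \in chips N) = (x < N).
Proof. by rewrite /chips mem_iota add1n ltnS. Qed.

Lemma in_chips N l : (l \in chips N) = (0 < l) && (l.-1 < N).
Proof. by case: l => [|l]; rewrite ?in_chipsS // /chips mem_iota. Qed.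

Definition Pd k m (p : nat -> nat) d : nat -> seq nat := fun l =>
  if l \in chips (k ^ m.+1) then [seq dg k (p j) l.-1 | j <- iota 0 d] else [::].

Definition Ld k m (p : nat -> nat) d : seq (seq nat * seq nat) :=
  [seq (Pd k m p d (enc k (p d) a 0).+1, [seq (enc k (p d) a i).+1 | i <- iota 0 k])
  | a <- iota 0 (k ^ m)].




Lemma Ld_uniq k m p d : 0 < k -> uniq (flatten (map snd (Ld k m p d))).
Proof.
move=> k0; rewrite /Ld -map_comp /comp /=.
apply: allpairs_uniq; rewrite ?iota_uniq //.
move=> [a i] [a' i'] /allpairsP [[a1 i1] /= [h1 h2 [E1 E2]]].
move=> /allpairsP [[a2 i2] /= [h3 h4 [E3 E4]]] /= [E].
subst; rewrite !mem_iota /= in h2 h4.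
by case: (enc_inj h2 h4 E) => -> ->.
Qed.

Lemma mem_iota0 n i : (i \in iota 0 n) = (i < n).
Proof. by rewrite mem_iota. Qed.

Definition phyp (m : nat) (p : nat -> nat) :=
  (forall d, d <= m -> p d <= m) /\ (forall j d, j < d -> d <= m -> p j != p d).

Lemma Pd_enc k m p d a i : phyp m p -> d <= m -> a < k ^ m -> i < k ->
  Pd k m p d (enc k (p d) a i).+1 = Pd k m p d (enc k (p d) a 0).+1.
Proof.
move=> [hp1 hp2] dm am ik; have k0 : 0 < k := leq_ltn_trans (leq0n i) ik.
rewrite /Pd !in_chipsS !enc_lt ?hp1 //=.
apply/eq_in_map => j; rewrite mem_iota0 /= => jd.
by apply: enc_other => //; apply: hp2.
Qed.

Lemma Ld_legal k m p d : 0 < k -> phyp m p -> d <= m ->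
  all (fun vs => legal_fire k (k ^ m.+1) (Pd k m p d) vs.1 vs.2) (Ld k m p d).
Proof.
move=> k0 hp dm; apply/allP => vs /mapP [a]; rewrite mem_iota0 /= => am -> /=.
have K0 : 0 < k ^ p d by rewrite expn_gt0 k0.
rewrite /legal_fire size_map size_iota eqxx /= sorted_map.
rewrite (sub_sorted _ (iota_ltn_sorted 0 k)) /=; last first.
  by move=> i i' /= ii; rewrite ltnS /enc ltn_add2l ltn_mul2l K0 ltn_add2r.
apply/allP => l /mapP [i]; rewrite mem_iota0 /= => ik ->.
rewrite in_chipsS enc_lt ?(proj1 hp) //=.
by rewrite (Pd_enc hp dm am ik).
Qed.

Lemma Ld_step k m p d : 0 < k -> phyp m p -> d <= m ->
  fire_list (Pd k m p d) (Ld k m p d) =1 Pd k m p d.+1.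
Proof.
move=> k0 hp dm l.
have pdm : p d <= m := proj1 hp d dm.
case lc: (l \in chips (k ^ m.+1)); last first.
  rewrite fire_list_out; first by rewrite /Pd lc.
  apply/negP => /flatten_mapP [vs /mapP [a am ->]] /mapP [i].
  rewrite mem_iota0 in am; rewrite mem_iota0 /= => ik El.
  by move: lc; rewrite El in_chipsS enc_lt.
move: lc; case: l => [|x]; first by rewrite in_chips.
rewrite in_chipsS => xm.
set a := dec k (p d) x; set i := dg k (p d) x.
have am : a < k ^ m by apply: dec_lt.
have ik : i < k by apply: ltn_pmod.
have Ex : enc k (p d) a i = x by apply: enc_dec.
have inj : injective (fun i => (enc k (p d) a i).+1).
  by move=> i1 i2 /= [] /addnI /eqP; rewrite eqn_mul2l expn_eq0 eqn0Ngt k0 /= => /eqP /addIn.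
rewrite (@fire_list_in _ _ (Pd k m p d (enc k (p d) a 0).+1,
     [seq (enc k (p d) a i).+1 | i <- iota 0 k]) _ (Ld_uniq m p d k0)).
- rewrite /= -{1}Ex index_map // -{1}(add0n i) -{1}(nth_iota 0 0 ik) index_uniq ?size_iota ?iota_uniq //.
  by rewrite -(Pd_enc hp dm am ik) Ex /Pd in_chipsS xm -(addn1 d) iotaD map_cat cats1.
- by apply/mapP; exists a; rewrite ?mem_iota0.
- by rewrite /= -Ex; apply: map_f; rewrite mem_iota0.
Qed.

Lemma Pd_reach k m p d : 0 < k -> phyp m p -> d <= m.+1 ->
  reachable k (k ^ m.+1) (Pd k m p d).
Proof.
move=> k0 hp; elim: d => [|d IH] dm.
  have -> : Pd k m p 0 = init_conf.
    by apply: functional_extensionality => l; rewrite /Pd /init_conf; case: ifP.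
  exact: reach_init.
have -> : Pd k m p d.+1 = fire_list (Pd k m p d) (Ld k m p d).
  by apply: functional_extensionality => l; rewrite Ld_step.
apply: fire_list_reach; first by apply: IH; apply: ltnW.
- exact: Ld_uniq.
- exact: Ld_legal.
Qed.

Lemma lex_total : total lex_le.
Proof.
elim=> [|x a IH] [|y b] //=; case: (ltngtP x y) => //= ->.
Qed.

Lemma lex_trans : transitive lex_le.
Proof.
move=> b a; elim: a b => [|x a IH] [|y b] [|z c] //=.
move=> /orP[xy|/andP[/eqP exy hab]] /orP[yz|/andP[/eqP eyz hbc]].
- by rewrite (ltn_trans xy yz).
- by rewrite -eyz xy.
- by rewrite exy yz.
- by rewrite exy eyz eqxx (IH _ _ hab hbc) orbT.
Qed.

Lemma lex_anti : antisymmetric lex_le.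
Proof.
elim=> [|x a IH] [|y b] //=.
move=> /andP[/orP[xy|/andP[/eqP exy hab]] /orP[yx|/andP[/eqP eyx hba]]].
- by move: (ltn_trans xy yx); rewrite ltnn.
- by move: xy; rewrite eyx ltnn.
- by move: yx; rewrite exy ltnn.
- by rewrite exy (IH b) // hab hba.
Qed.

Lemma dg0 k x : dg k 0 x = x %% k.
Proof. by rewrite /dg expn0 divn1. Qed.

Lemma dgS k q x : dg k q.+1 x = dg k q (x %/ k).
Proof. by rewrite /dg expnS divnMA. Qed.

Lemma digits_inj k D x y : 0 < k -> x < k ^ D -> y < k ^ D ->
  (forall q, q < D -> dg k q x = dg k q y) -> x = y.
Proof.
move=> k0; elim: D x y => [|D IH] x y.
  by rewrite expn0 !ltnS !leqn0 => /eqP -> /eqP ->.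
move=> xD yD h.
have e0 := h 0 isT; rewrite !dg0 in e0.
have e1 : x %/ k = y %/ k.
  apply: IH; rewrite ?ltn_divLR // -?expnSr //.
  by move=> q qD; rewrite -!dgS; apply: h.
by rewrite (divn_eq x k) (divn_eq y k) e0 e1.
Qed.

Definition msb k n x := [seq dg k (n.-1 - j) x | j <- iota 0 n].

Lemma msb_mod k n x : 0 < k -> msb k n x = msb k n (x %% k ^ n).
Proof.
move=> k0; apply/eq_in_map => j; rewrite mem_iota0 => jn.
apply: dg_mod => //; lia.
Qed.

Lemma msbS k n x : msb k n.+1 x = dg k n x :: msb k n x.
Proof.
rewrite /msb /= subn0; congr cons.
rewrite -[iota 1 n]/(iota (1 + 0) n) iotaDl -map_comp; apply/eq_map => j /=.
by congr dg; lia.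
Qed.

Lemma dg_top k n x : x < k ^ n.+1 -> dg k n x = x %/ k ^ n.
Proof.
move=> xn; have k0 : 0 < k by case: k xn => //; rewrite exp0n.
by rewrite /dg modn_small // ltn_divLR ?expn_gt0 ?k0 // -expnS.
Qed.

Lemma msb_lt k n x y b b' : 0 < k -> x < y -> y < k ^ n ->
  lex_le (msb k n x ++ b) (msb k n y ++ b').
Proof.
move=> k0; elim: n x y => [|n IH] x y xy.
  by rewrite expn0 ltnS leqn0 => /eqP yz; subst y.
move=> yn; have xn := ltn_trans xy yn.
have K0 : 0 < k ^ n by rewrite expn_gt0 k0.
rewrite !msbS /= !dg_top // [msb k n x]msb_mod // [msb k n y]msb_mod //.
have le : x %/ k ^ n <= y %/ k ^ n by apply: leq_div2r; apply: ltnW.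
case: (ltngtP (x %/ k ^ n) (y %/ k ^ n)) => //=; first by rewrite ltnNge le.
move=> E; apply: IH; rewrite ?ltn_pmod //.
by move: xy; rewrite {1}(divn_eq x (k ^ n)) {1}(divn_eq y (k ^ n)) E ltn_add2l.
Qed.

Lemma count_iota_lt c M : count (fun y => y < c) (iota 0 M) = minn c M.
Proof.
elim: M => [|M IH]; first by rewrite minn0.
rewrite -addn1 iotaD count_cat IH /= addn0 add0n.
case: ltnP => h /=; lia.
Qed.

Definition pp n d := if d < n then n.-1 - d else d.

Lemma pp_inv n d : pp n (pp n d) = d.
Proof.
rewrite /pp; case: (ltnP d n) => h1 /=; first by rewrite ifT; lia.
by rewrite ifF // ltnNge h1.
Qed.

Lemma pp_hyp n m : m.+1 = 2 * n -> phyp m (pp n).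
Proof.
move=> E; split => [d dm|j d jd dm]; rewrite /pp.
  case: ifP => _; lia.
by case: ifP => h1; case: ifP => h2; apply/eqP; lia.
Qed.

Lemma pos_eq k m n x : x < k ^ m.+1 ->
  Pd k m (pp n) m.+1 x.+1 = [seq dg k (pp n j) x | j <- iota 0 m.+1].
Proof. by move=> xm; rewrite /Pd in_chipsS xm. Qed.

Lemma pos_inj k m n x y : m.+1 = 2 * n -> 0 < k -> x < k ^ m.+1 -> y < k ^ m.+1 ->
  Pd k m (pp n) m.+1 x.+1 = Pd k m (pp n) m.+1 y.+1 -> x = y.
Proof.
move=> En k0 xm ym; rewrite !pos_eq // => E.
apply: (digits_inj k0 xm ym) => q qm.
have jm : pp n q < m.+1.
  by move: qm; rewrite /pp; case: ifP => _; lia.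
have := congr1 (nth 0 ^~ (pp n q)) E.
have jm' : pp n q < size (iota 0 m.+1) by rewrite size_iota.
by rewrite /= !(nth_map 0 0 _ jm') nth_iota // add0n pp_inv.
Qed.

Lemma pos_inj_in k m n : m.+1 = 2 * n -> 0 < k ->
  {in chips (k ^ m.+1) &, injective (Pd k m (pp n) m.+1)}.
Proof.
move=> En k0 [|x] [|y]; rewrite ?in_chipsS; try by rewrite in_chips.
move=> xm ym E.
by rewrite (pos_inj En k0 xm ym E).
Qed.

Lemma stable_final k m n : 2 <= k -> m.+1 = 2 * n ->
  stable k (k ^ m.+1) (Pd k m (pp n) m.+1).
Proof.
move=> hk En v; have k0 : 0 < k by apply: ltnW.
rewrite -[count _ _]/(count (preim (Pd k m (pp n) m.+1) (pred1 v)) (chips _)).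
rewrite -count_map count_uniq_mem.
  by apply: leq_ltn_trans (leq_b1 _) hk.
by rewrite map_inj_in_uniq ?iota_uniq //; apply: pos_inj_in.
Qed.

Theorem theorem4p2 (k n : nat) (hk : 2 <= k) (hn : 1 <= n) (P : 'S_(k ^ n)) :
  exists pos : nat -> seq nat,
    [/\ reachable k (k ^ (2 * n)) pos,
        stable k (k ^ (2 * n)) pos &
        exists t : seq nat,
          subseq t (read_word (k ^ (2 * n)) pos) /\ order_iso t P].
Proof.
have k0 : 0 < k by apply: ltnW.
set m := (2 * n).-1.
have En : m.+1 = 2 * n by rewrite /m prednK // muln_gt0.
have hp := pp_hyp En.
rewrite -En.
move: P; set K := k ^ n => P.
have K0 : 0 < K by rewrite expn_gt0 k0.
have EK : k ^ m.+1 = K * K by rewrite En mul2n -addnn expnD.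
set pos := Pd k m (pp n) m.+1.
exists pos; split.
- exact: Pd_reach.
- exact: stable_final.
set lab := fun j : 'I_K => (nat_of_ord j + K * nat_of_ord (P j)).+1.
have labc : forall j : 'I_K, nat_of_ord j + K * nat_of_ord (P j) < k ^ m.+1.
  move=> j; rewrite EK; apply: (@leq_trans (K * (P j).+1)).
    by rewrite mulnS ltn_add2r; exact: ltn_ord.
  by rewrite leq_mul2l ltn_ord orbT.
have labmod : forall j : 'I_K, (nat_of_ord j + K * nat_of_ord (P j)) %% K = val j.
  by move=> j; rewrite modDMk modn_small //; exact: ltn_ord.
have poslab : forall j : 'I_K, exists b, pos (lab j) = msb k n (val j) ++ b.
  move=> j; rewrite /pos /lab pos_eq // En mul2n -addnn iotaD map_cat.
  eexists; congr (_ ++ _).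
  rewrite -[in RHS](labmod j) -(msb_mod _ _ k0); apply/eq_in_map => i; rewrite mem_iota0 => iK.
  by rewrite /pp iK.
set r := fun l1 l2 => lex_le (pos l1) (pos l2).
have rt : total r by move=> a b; exact: lex_total.
have rtr : transitive r by move=> b a c; exact: lex_trans.
set t := [seq lab j | j <- enum 'I_K].
have srt : sorted r t.
  rewrite sorted_map; have := iota_ltn_sorted 0 K; rewrite -val_enum_ord sorted_map.
  apply: sub_sorted => j j' /= jj'.
  have [b Eb] := poslab j; have [b' Eb'] := poslab j'.
  by rewrite /r Eb Eb'; apply: msb_lt k0 jj' (ltn_ord j').
have labinj : injective lab.
  move=> j j' [] E; apply/val_inj; have := congr1 (modn^~ K) E.
  by rewrite /= !labmod.
have ut : uniq t by rewrite map_inj_uniq ?enum_uniq.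
have tch : {subset t <= chips (k ^ m.+1)}.
  by move=> l /mapP [j _ ->]; rewrite in_chipsS.
have pc : perm_eq (chips (k ^ m.+1)) (t ++ filter (predC (mem t)) (chips (k ^ m.+1))).
  rewrite -(perm_filterC (mem t) (chips (k ^ m.+1))) perm_cat2r.
  apply: uniq_perm; rewrite ?filter_uniq ?iota_uniq // => l.
  by rewrite mem_filter; apply/andb_idr => /tch.
have se : sort r (chips (k ^ m.+1)) = sort r (t ++ filter (predC (mem t)) (chips (k ^ m.+1))).
  apply/perm_sort_inP => //.
  - move=> y x z _ _ _ h1 h2; exact: rtr h1 h2.
  - by move=> a b ha hb /lex_anti; apply: (pos_inj_in En k0).
exists t; split.
  rewrite /read_word -/r se; apply: sorted_subseq_sort => //.
  exact: prefix_subseq.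
split.
- by rewrite size_map size_enum_ord.
- exact: ut.
move=> j; rewrite (nth_map j) ?size_enum_ord // nth_ord_enum count_map.
have -> : count (preim lab (fun x => x < lab j)) (enum 'I_K) =
          count (fun j' : 'I_K => P j' < P j) (enum 'I_K).
  apply: eq_count => j' /=; rewrite /lab ltnS.
  have := ltn_ord j; have := ltn_ord j'.
  case: (ltngtP (P j') (P j)) => h.
  - have : K * (P j').+1 <= K * P j by rewrite leq_mul2l h orbT.
    rewrite mulnS; move=> *; lia.
  - have : K * (P j).+1 <= K * P j' by rewrite leq_mul2l h orbT.
    rewrite mulnS; move=> *; apply/negbTE; rewrite -leqNgt; lia.
  - move: h => /val_inj /perm_inj ->; by rewrite ltnn.
rewrite -[LHS](count_map P (fun y : 'I_K => y < P j)).
have pe : perm_eq (map P (enum 'I_K)) (enum 'I_K).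
  apply: uniq_perm.
  - by rewrite (map_inj_uniq (@perm_inj _ P)) enum_uniq.
  - exact: enum_uniq.
  move=> y; rewrite mem_enum; apply/mapP; exists (P^-1 y)%g; rewrite ?mem_enum //.
  by rewrite permKV.
rewrite (seq.permP pe) -[LHS](count_map val (fun y => y < P j)) val_enum_ord count_iota_lt.
by apply/minn_idPl/ltnW.
Qed.
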